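(* Let $(M,\Sigma_M,\mu,T)$ be a measure-preserving deterministic system, where $(M,d_M)$ is a metric space and $\Sigma_M$ contains all open balls of $(M,d_M)$. Suppose $T$ is continuous at some point $x\in M$, every open ball around $x$ has positive $\mu$-measure, and there is a set $D\in\Sigma_M$ with $\mu(D)>0$ and $d_M(T(x),D):=\inf\{d_M(T(x),m): m\in D\}>0$. Then there exists $\varepsilon>0$ such that there is no Bernoulli process (with outcome space a finite subset of $M$) to whose deterministic representation $(M,\Sigma_M,\mu,T)$ is $\varepsilon$-congruent.
   Context: A deterministic system is a quadruple $(M,\Sigma_M,\mu,T)$ where $(M,\Sigma_M,\mu)$ is a probability space and $T:M\to M$ is a bijection with $T,T^{-1}$ measurable; it is measure-preserving if $\mu(T(A))=\mu(A)$ for all $A\in\Sigma_M$. A stochastic process $\{Z_t;t\in\mathbb{Z}\}$ is a family of random variables on a common probability space with values in a common measurable space $(\bar M,\Sigma_{\bar M})$; it is stationary if the joint distribution of $(Z_{t_1+h},\dots,Z_{t_n+h})$ equals that of $(Z_{t_1},\dots,Z_{t_n})$ for all $t_i,h\in\mathbb{Z}$, $n\in\mathbb{N}$. A Bernoulli process is a process with finite outcome space $\bar M=\{s_1,\dots,s_N\}$, $\Sigma_{\bar M}$ the power set, $P\{Z_t=s_k\}=p_k$ for all $t$ and $k$, and the $Z_t$ independent. The deterministic representation of a process $\{Z_t\}$ is $(M_2,\Sigma_{M_2},\mu_2,T_2,\Phi_0)$: $M_2$ is the set of bi-infinite sequences $(m_i)_{i\in\mathbb{Z}}$ with $m_i\in\bar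 M$, $\Sigma_{M_2}$ is the $\sigma$-algebra generated by cylinder sets $\{m: m_{i_1}\in A_1,\dots,m_{i_n}\in A_n\}$ ($A_j\in\Sigma_{\bar M}$), $\mu_2$ is the unique measure assigning each such cylinder the probability $P\{Z_{i_1}\in A_1,\dots,Z_{i_n}\in A_n\}$, $T_2$ is the left shift $(T_2 m)_i=m_{i+1}$, and $\Phi_0(m)=m_0$. Two measure-preserving systems $(M_1,\Sigma_1,\mu_1,T_1)$, $(M_2,\Sigma_2,\mu_2,T_2)$ are isomorphic if there are measurable $\hat M_i\subseteq M_i$ with $\mu_i(M_i\setminus\hat M_i)=0$, $T_i\hat M_i\subseteq\hat M_i$, and a bijection $\phi:\hat M_1\to\hat M_2$ such that $\phi$ and $\phi^{-1}$ map measurable sets to measurable sets, $\mu_2(\phi(A))=\mu_1(A)$ for measurable $A\subseteq\hat M_1$, and $\phi(T_1 m)=T_2\phi(m)$ for $m\in\hat M_1$. If $\{Z_t\}$ is stationary with values in $M$ and has deterministic representation $(M_2,\Sigma_{M_2},\mu_2,T_2,\Phi_0)$, then $(M,\Sigma_M,\mu,T)$ is $\varepsilon$-congruent to it if $(M,\Sigma_M,\mu,T)$ is isomorphic to $(M_2,\Sigma_{M_2},\mu_2,T_2)$ via some $\phi$ and $d_M(m,\Phi_0(\phi(m)))<\varepsilon$ for all $m$ outside a set of $\mu$-measure $<\varepsilon$. *)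

(* Defs.v *)
From Stdlib Require Import Reals List ZArith.
Open Scope R_scope.

Definition image {X Y : Type} (f : X -> Y) (A : X -> Prop) : Y -> Prop :=
  fun y => exists x, A x /\ y = f x.

Definition sigma_algebra {X : Type} (S : (X -> Prop) -> Prop) : Prop :=
  S (fun _ => True) /\
  (forall A, S A -> S (fun x => ~ A x)) /\
  (forall A : nat -> X -> Prop, (forall n, S (A n)) -> S (fun x => exists n, A n x)).

Definition generated {X : Type} (G : (X -> Prop) -> Prop) (A : X -> Prop) : Prop :=
  forall S, sigma_algebra S -> (forall B, G B -> S B) -> S A.

Definition is_measure {X : Type} (S : (X -> Prop) -> Prop) (mu : (X -> Prop) -> R) : Prop :=
  (forall A, S A -> 0 <= mu A) /\
  mu (fun _ => False) = 0 /\
  (forall A : nat -> X -> Prop,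
     (forall n, S (A n)) ->
     (forall n m x, n <> m -> A n x -> A m x -> False) ->
     infinite_sum (fun n => mu (A n)) (mu (fun x => exists n, A n x))).

Definition probability_space {X : Type} (S : (X -> Prop) -> Prop) (mu : (X -> Prop) -> R) : Prop :=
  sigma_algebra S /\ is_measure S mu /\ mu (fun _ => True) = 1.

Definition measurable_map {X Y : Type} (SX : (X -> Prop) -> Prop) (SY : (Y -> Prop) -> Prop)
  (f : X -> Y) : Prop :=
  forall A, SY A -> SX (fun x => A (f x)).

Definition mp_det_system {M : Type} (S : (M -> Prop) -> Prop) (mu : (M -> Prop) -> R)
  (T : M -> M) : Prop :=
  probability_space S mu /\
  (forall x y, T x = T y -> x = y) /\ (forall y, exists x, T x = y) /\
  measurable_map S S T /\
  (forall A, S A -> S (image T A)) /\            (* T^{-1} measurable *)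
  (forall A, S A -> mu (image T A) = mu A).

Definition metric {M : Type} (d : M -> M -> R) : Prop :=
  (forall x y, 0 <= d x y) /\
  (forall x y, d x y = 0 <-> x = y) /\
  (forall x y, d x y = d y x) /\
  (forall x y z, d x z <= d x y + d y z).

Definition ball {M : Type} (d : M -> M -> R) (x : M) (r : R) : M -> Prop :=
  fun y => d x y < r.

(** Sequence space over a finite outcome type O: M2 = Z -> O. *)
Definition cylinder {O : Type} (A : (Z -> O) -> Prop) : Prop :=
  exists l : list (Z * (O -> Prop)),
    forall m, A m <-> Forall (fun p => snd p (m (fst p))) l.

Definition seq_sigma {O : Type} : ((Z -> O) -> Prop) -> Prop := generated (@cylinder O).

Definition shift {O : Type} (m : Z -> O) : Z -> O := fun i => m (i + 1)%Z.

(** mu2 is the distribution measure of a Bernoulli process with one-step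
    probabilities p: elementary cylinders {m | m_{i_j} = o_j} (distinct indices)
    get measure prod_j p(o_j) (independence + identical distribution). *)
Definition bernoulli_measure {O : Type} (p : O -> R) (mu2 : ((Z -> O) -> Prop) -> R) : Prop :=
  probability_space seq_sigma mu2 /\
  forall l : list (Z * O), NoDup (map fst l) ->
    mu2 (fun m => Forall (fun q => m (fst q) = snd q) l)
    = fold_right (fun q acc => p (snd q) * acc) 1 l.

(** Isomorphism of (M,S,mu,T) with (Z->O, seq_sigma, mu2, shift) via phi,
    together with the eps-closeness d(m, Phi_0(phi m)) < eps off a small set. *)
Definition eps_congruent {M O : Type} (S : (M -> Prop) -> Prop) (mu : (M -> Prop) -> R)
  (T : M -> M) (d : M -> M -> R) (emb : O -> M) (mu2 : ((Z -> O) -> Prop) -> R)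
  (eps : R) : Prop :=
  exists (H1 : M -> Prop) (H2 : (Z -> O) -> Prop) (phi : M -> (Z -> O)),
    S H1 /\ mu (fun m => ~ H1 m) = 0 /\ (forall m, H1 m -> H1 (T m)) /\
    seq_sigma H2 /\ mu2 (fun m => ~ H2 m) = 0 /\ (forall m, H2 m -> H2 (shift m)) /\
    (forall m, H1 m -> H2 (phi m)) /\
    (forall m m', H1 m -> H1 m' -> phi m = phi m' -> m = m') /\
    (forall w, H2 w -> exists m, H1 m /\ phi m = w) /\
    (forall A, S A -> (forall m, A m -> H1 m) -> seq_sigma (image phi A)) /\
    (forall B, seq_sigma B -> (forall w, B w -> H2 w) -> S (fun m => H1 m /\ B (phi m))) /\
    (forall A, S A -> (forall m, A m -> H1 m) -> mu2 (image phi A) = mu A) /\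
    (forall m, H1 m -> phi (T m) = shift (phi m)) /\
    exists E, S E /\ mu E < eps /\
      forall m, H1 m -> ~ E m -> d m (emb (phi m 0%Z)) < eps.

(* Main.v *)
Require Import Defs.
From Stdlib Require Import Reals List ZArith Lra Lia Classical FunctionalExtensionality PropExtensionality ClassicalEpsilon.
Open Scope R_scope.

Lemma seteq {X} (A B : X -> Prop) : (forall x, A x <-> B x) -> A = B.
Proof. intro H; apply functional_extensionality; intro x; apply propositional_extensionality; apply H. Qed.

Lemma sa_compl {X} (S : (X->Prop)->Prop) A : sigma_algebra S -> S A -> S (fun x => ~ A x).
Proof. intros [_ [H _]] HA; auto. Qed.

Lemma sa_union {X} (S : (X->Prop)->Prop) (A B : X -> Prop) : sigma_algebra S -> S A -> S B -> S (fun x => A x \/ B x).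
Proof.
  intros [H0 [H1 H2]] HA HB.
  replace (fun x => A x \/ B x) with (fun x => exists n : nat, (match n with 0%nat => A | _ => B end) x).
  - apply H2. intros [|n]; simpl; auto.
  - apply seteq. intro x; split.
    + intros [[|n] Hn]; simpl in Hn; auto.
    + intros [H|H]; [exists 0%nat | exists 1%nat]; exact H.
Qed.

Lemma sa_inter {X} (S : (X->Prop)->Prop) (A B : X -> Prop) : sigma_algebra S -> S A -> S B -> S (fun x => A x /\ B x).
Proof.
  intros HS HA HB.
  replace (fun x => A x /\ B x) with (fun x => ~ ((fun y => ~ A y \/ ~ B y) x)).
  - apply sa_compl; auto. apply sa_union; auto; apply sa_compl; auto.
  - apply seteq; intro x; simpl; split.
    + intro H. split; apply NNPP; intro; apply H; auto.
    + intros [a b] [h|h]; auto.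
Qed.

Definition seq2 {X} (A B : X -> Prop) (n : nat) : X -> Prop :=
  match n with 0%nat => A | 1%nat => B | _ => fun _ => False end.

Lemma mu_add {X} (S : (X->Prop)->Prop) (mu : (X->Prop)->R) A B : probability_space S mu -> S A -> S B ->
  (forall x, A x -> B x -> False) -> mu (fun x => A x \/ B x) = mu A + mu B.
Proof.
  intros [HS [[Hnn [H0 Hadd]] _]] HA HB Hdis.
  assert (Hs : infinite_sum (fun n => mu (seq2 A B n)) (mu (fun x => exists n, seq2 A B n x))).
  { apply Hadd.
    - intros [|[|n]]; simpl; auto. destruct HS as [HT [HC _]].
      replace (fun _ : X => False) with (fun x : X => ~ (fun _ : X => True) x).
      + apply HC; auto.
      + apply seteq; intro; simpl; tauto.
    - intros n m x Hnm K1 K2; destruct n as [|[|n]], m as [|[|m]]; simpl in *;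
        try contradiction; try (apply Hnm; reflexivity); eauto. }
  assert (Hs2 : infinite_sum (fun n => mu (seq2 A B n)) (mu A + mu B)).
  { intros e He. exists 1%nat. intros n Hn.
    assert (Heq : sum_f_R0 (fun n => mu (seq2 A B n)) n = mu A + mu B).
    { destruct n; [lia|]. clear Hn. induction n.
      - reflexivity.
      - change (sum_f_R0 (fun n => mu (seq2 A B n)) (Datatypes.S (Datatypes.S n))) with
          (sum_f_R0 (fun n => mu (seq2 A B n)) (Datatypes.S n) + mu (seq2 A B (Datatypes.S (Datatypes.S n)))).
        rewrite IHn. simpl. rewrite H0. ring. }
    rewrite Heq. unfold R_dist. rewrite Rminus_diag_eq, Rabs_R0; auto. }
  replace (fun x => A x \/ B x) with (fun x => exists n, seq2 A B n x).
  - eapply uniqueness_sum; eauto.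
  - apply seteq; intro x; split.
    + intros [[|[|n]] Hn]; simpl in Hn; tauto.
    + intros [h|h]; [exists 0%nat|exists 1%nat]; exact h.
Qed.

Lemma mu_nn {X} (S : (X->Prop)->Prop) (mu : (X->Prop)->R) A : probability_space S mu -> S A -> 0 <= mu A.
Proof. intros [_ [[H _] _]] HA; auto. Qed.

Lemma mu_split {X} (S : (X->Prop)->Prop) (mu : (X->Prop)->R) (A Y : X -> Prop) : probability_space S mu -> S A -> S Y ->
  mu A = mu (fun x => A x /\ Y x) + mu (fun x => A x /\ ~ Y x).
Proof.
  intros HP HA HY. pose proof HP as [HS _].
  rewrite <- mu_add with (S:=S); auto.
  - f_equal. apply seteq; intro x. destruct (classic (Y x)); tauto.
  - apply sa_inter; auto.
  - apply sa_inter; auto. apply sa_compl; auto.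
  - intros x [_ a] [_ b]; auto.
Qed.

Lemma mu_mono {X} (S : (X->Prop)->Prop) (mu : (X->Prop)->R) (A B : X -> Prop) : probability_space S mu -> S A -> S B ->
  (forall x, A x -> B x) -> mu A <= mu B.
Proof.
  intros HP HA HB Hsub. pose proof HP as [HS _].
  rewrite (mu_split S mu B A); auto.
  replace (fun x => B x /\ A x) with A by (apply seteq; intro x; split; [auto|tauto]).
  assert (0 <= mu (fun x => B x /\ ~ A x)). { apply (mu_nn S); auto. apply sa_inter; auto; apply sa_compl; auto. }
  lra.
Qed.

Lemma mu_subadd {X} (S : (X->Prop)->Prop) (mu : (X->Prop)->R) (A B : X -> Prop) : probability_space S mu -> S A -> S B ->
  mu (fun x => A x \/ B x) <= mu A + mu B.
Proof.
  intros HP HA HB. pose proof HP as [HS _].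
  replace (fun x => A x \/ B x) with (fun x => A x \/ (fun y => B y /\ ~ A y) x).
  - rewrite (mu_add S); auto.
    + assert (mu (fun y => B y /\ ~ A y) <= mu B). { apply (mu_mono S); auto. apply sa_inter; auto; apply sa_compl; auto. intros x [h _]; auto. }
      lra.
    + apply sa_inter; auto; apply sa_compl; auto.
    + intros x a [_ b]; auto.
  - apply seteq; intro x. destruct (classic (A x)); tauto.
Qed.

Lemma mu_cover {X} (S : (X->Prop)->Prop) (mu : (X->Prop)->R) (A Y Z : X -> Prop) : probability_space S mu -> S A -> S Y -> S Z ->
  (forall x, A x -> Y x \/ Z x) -> mu A <= mu Y + mu Z.
Proof.
  intros HP HA HY HZ H. pose proof HP as [HS _].
  apply Rle_trans with (mu (fun x => Y x \/ Z x)).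
  - apply (mu_mono S); auto. apply sa_union; auto.
  - apply (mu_subadd S); auto.
Qed.

Lemma cyl1_meas {O} (P : O -> Prop) (i : Z) : seq_sigma (fun w : Z -> O => P (w i)).
Proof.
  intros S HS HG. apply HG. exists ((i,P)::nil). intro m; split.
  - intro; constructor; auto.
  - intro H; inversion H; auto.
Qed.

Lemma cyl2_meas {O} (P Q : O -> Prop) (i j : Z) : seq_sigma (fun w : Z -> O => P (w i) /\ Q (w j)).
Proof.
  intros S HS HG. apply HG. exists ((i,P)::(j,Q)::nil). intro m; split.
  - intros [a b]; repeat constructor; auto.
  - intro H; inversion H as [|? ? H' H'' E]; subst. inversion H''; auto.
Qed.

Definition sumP {O} (p : O -> R) (l : list O) : R := fold_right (fun o acc => p o + acc) 0 l.

Lemma cyl_sum1 {O} (p : O -> R) mu2 : bernoulli_measure p mu2 -> forall l, NoDup l ->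
  mu2 (fun w : Z -> O => In (w 0%Z) l) = sumP p l.
Proof.
  intros [HP Hc]. pose proof HP as [HS [[_ [H0 _]] _]].
  induction l as [|o l IH]; intro Hnd.
  - exact H0.
  - inversion Hnd; subst. simpl.
    change (fun w : Z -> O => o = w 0%Z \/ In (w 0%Z) l) with
      (fun w : Z -> O => (fun w => o = w 0%Z) w \/ (fun w => In (w 0%Z) l) w).
    rewrite (mu_add seq_sigma); auto.
    + rewrite IH; auto. f_equal.
      replace (fun w : Z -> O => o = w 0%Z) with
        (fun m : Z -> O => Forall (fun q => m (fst q) = snd q) ((0%Z,o)::nil)).
      * rewrite Hc; simpl; [ring|]. constructor; [intros []|constructor].
      * apply seteq; intro m; split; intro H.
        -- inversion H; subst; simpl in *; auto.
        -- repeat constructor; simpl; auto.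
    + apply (cyl1_meas (fun z => o = z)).
    + apply (cyl1_meas (fun z => In z l)).
    + intros w e h; subst; auto.
Qed.

Lemma cyl_pt2 {O} (p : O -> R) mu2 : bernoulli_measure p mu2 -> forall o1 l, NoDup l ->
  mu2 (fun w : Z -> O => o1 = w 0%Z /\ In (w 1%Z) l) = p o1 * sumP p l.
Proof.
  intros [HP Hc] o1. pose proof HP as [HS [[_ [H0 _]] _]].
  induction l as [|o l IH]; intro Hnd.
  - simpl. replace (fun w : Z -> O => o1 = w 0%Z /\ False) with (fun _ : Z -> O => False).
    + rewrite H0; ring.
    + apply seteq; intro; tauto.
  - inversion Hnd; subst. simpl.
    replace (fun w : Z -> O => o1 = w 0%Z /\ (o = w 1%Z \/ In (w 1%Z) l)) with
      (fun w : Z -> O => (fun w => o1 = w 0%Z /\ o = w 1%Z) w \/ (fun w => o1 = w 0%Z /\ In (w 1%Z) l) w)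
      by (apply seteq; intro; tauto).
    rewrite (mu_add seq_sigma); auto.
    + rewrite IH; auto.
      replace (fun w : Z -> O => o1 = w 0%Z /\ o = w 1%Z) with
        (fun m : Z -> O => Forall (fun q => m (fst q) = snd q) ((0%Z,o1)::(1%Z,o)::nil)).
      * rewrite Hc; simpl; [ring|]. constructor.
        -- simpl. intros [h|[]]; discriminate.
        -- constructor; [intros []|constructor].
      * apply seteq; intro m; split; intro H.
        -- inversion H as [|? ? A1 A2 E]; subst. inversion A2; subst; simpl in *; auto.
        -- destruct H; repeat constructor; simpl; auto.
    + apply (cyl2_meas (fun z => o1 = z) (fun z => o = z)).
    + apply (cyl2_meas (fun z => o1 = z) (fun z => In z l)).
    + intros w [_ e] [_ h]; subst; auto.
Qed.

Lemma cyl_sum2 {O} (p : O -> R) mu2 : bernoulli_measure p mu2 -> forall l1 l2, NoDup l1 -> NoDup l2 ->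
  mu2 (fun w : Z -> O => In (w 0%Z) l1 /\ In (w 1%Z) l2) = sumP p l1 * sumP p l2.
Proof.
  intros Hb l1 l2 N1 N2. pose proof Hb as [HP Hc]. pose proof HP as [HS [[_ [H0 _]] _]].
  induction l1 as [|o l IH].
  - simpl. replace (fun w : Z -> O => False /\ In (w 1%Z) l2) with (fun _ : Z -> O => False).
    + rewrite H0; ring.
    + apply seteq; intro; tauto.
  - inversion N1; subst. simpl.
    replace (fun w : Z -> O => (o = w 0%Z \/ In (w 0%Z) l) /\ In (w 1%Z) l2) with
      (fun w : Z -> O => (fun w => o = w 0%Z /\ In (w 1%Z) l2) w \/ (fun w => In (w 0%Z) l /\ In (w 1%Z) l2) w)
      by (apply seteq; intro; tauto).
    rewrite (mu_add seq_sigma); auto.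
    + rewrite IH; auto. rewrite (cyl_pt2 p mu2 Hb); auto. ring.
    + apply (cyl2_meas (fun z => o = z) (fun z => In z l2)).
    + apply (cyl2_meas (fun z => In z l) (fun z => In z l2)).
    + intros w [e _] [h _]; subst; auto.
Qed.

Definition decb {O} (Q : O -> Prop) (o : O) : bool :=
  if excluded_middle_informative (Q o) then true else false.

Lemma in_decb {O} (Q : O -> Prop) enum o : (forall o, In o enum) -> (In o (filter (decb Q) enum) <-> Q o).
Proof.
  intro He. rewrite filter_In. unfold decb. destruct (excluded_middle_informative (Q o)); split; intuition.
  discriminate.
Qed.

Theorem theorem1 (M : Type) (S : (M -> Prop) -> Prop) (mu : (M -> Prop) -> R)
  (T : M -> M) (d : M -> M -> R)
  (Hsys : mp_det_system S mu T) (Hd : metric d)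
  (Hballs : forall y r, 0 < r -> S (ball d y r))
  (x : M)
  (Hcont : forall e, 0 < e -> exists delta, 0 < delta /\
             forall y, d x y < delta -> d (T x) (T y) < e)
  (Hpos : forall r, 0 < r -> 0 < mu (ball d x r))
  (D : M -> Prop) (HD : S D) (HmuD : 0 < mu D)
  (HdistD : exists c, 0 < c /\ forall m, D m -> c <= d (T x) m) :
  exists eps, 0 < eps /\
    forall (O : Type) (enum : list O) (p : O -> R) (emb : O -> M)
           (mu2 : ((Z -> O) -> Prop) -> R),
      (forall o, In o enum) -> NoDup enum ->
      (forall o o', emb o = emb o' -> o = o') ->
      bernoulli_measure p mu2 ->
      ~ eps_congruent S mu T d emb mu2 eps.
Proof.
  destruct HdistD as [c [Hc HcD]].
  destruct (Hcont (c/2)) as [delta [Hdel Hdelta]]; [lra|].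
  set (b := mu (ball d x (delta/2))).
  assert (Hb : 0 < b) by (apply Hpos; lra).
  set (a := mu D).
  set (eps := Rmin (Rmin (c/4) (delta/4)) (Rmin (Rmin (a/2) (b/2)) (a*b/8))).
  assert (E1 : eps <= c/4) by (apply Rle_trans with (Rmin (c/4) (delta/4)); [apply Rmin_l|apply Rmin_l]).
  assert (E2 : eps <= delta/4) by (apply Rle_trans with (Rmin (c/4) (delta/4)); [apply Rmin_l|apply Rmin_r]).
  assert (E3 : eps <= a/2) by (apply Rle_trans with (Rmin (Rmin (a/2) (b/2)) (a*b/8)); [apply Rmin_r|];
     apply Rle_trans with (Rmin (a/2) (b/2)); [apply Rmin_l|apply Rmin_l]).
  assert (E4 : eps <= b/2) by (apply Rle_trans with (Rmin (Rmin (a/2) (b/2)) (a*b/8)); [apply Rmin_r|];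
     apply Rle_trans with (Rmin (a/2) (b/2)); [apply Rmin_l|apply Rmin_r]).
  assert (E5 : eps <= a*b/8) by (apply Rle_trans with (Rmin (Rmin (a/2) (b/2)) (a*b/8)); [apply Rmin_r|apply Rmin_r]).
  assert (Hab : 0 < a*b) by (apply Rmult_lt_0_compat; unfold a; lra).
  assert (Heps : 0 < eps).
  { unfold eps. repeat apply Rmin_glb_lt; unfold a in *; lra. }
  exists eps; split; [exact Heps|].
  intros O enum p emb mu2 Henum Hnd Hinj Hber Hcong.
  destruct Hcong as (H1 & H2 & phi & HS1 & Hmu1 & Hinv1 & HS2 & Hmu2 & Hinv2 & Hmap & Hinj' & Hsurj
     & Hpre & Himg & Hmeas & Hshift & E & HSE & HmuE & Hclose).
  destruct Hsys as (HP & Tinj & Tsurj & Tmeas & Timg & Tmu).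
  destruct Hd as (dnn & d0 & dsym & dtri).
  pose proof Hber as [HP2 _].
  pose proof HP as [HSa _]. pose proof HP2 as [HSa2 _].
  assert (pull : forall B, seq_sigma B -> S (fun m => H1 m /\ B (phi m)) /\ mu (fun m => H1 m /\ B (phi m)) = mu2 B).
  { intros B HB.
    assert (HB' : seq_sigma (fun w => H2 w /\ B w)) by (apply sa_inter; auto).
    assert (Heq : (fun m => H1 m /\ (fun w => H2 w /\ B w) (phi m)) = (fun m => H1 m /\ B (phi m))).
    { apply seteq; intro m; split; [tauto|]. intros [h1 h2]; repeat split; auto. }
    assert (HSm : S (fun m => H1 m /\ B (phi m))).
    { rewrite <- Heq. apply (Himg (fun w => H2 w /\ B w)); auto. intros w [? ?]; auto. }
    split; auto.
    rewrite <- (Hmeas _ HSm (fun m H => proj1 H)).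
    replace (image phi (fun m => H1 m /\ B (phi m))) with (fun w => H2 w /\ B w).
    - rewrite (mu_split seq_sigma mu2 B H2); auto.
      assert (0 <= mu2 (fun w => B w /\ ~ H2 w)) by (apply (mu_nn seq_sigma); auto; apply sa_inter; auto; apply sa_compl; auto).
      assert (mu2 (fun w => B w /\ ~ H2 w) <= mu2 (fun w => ~ H2 w)).
      { apply (mu_mono seq_sigma); auto. apply sa_inter; auto; apply sa_compl; auto. apply sa_compl; auto. tauto. }
      replace (fun w => B w /\ H2 w) with (fun w => H2 w /\ B w) by (apply seteq; intro; tauto).
      lra.
    - apply seteq; intro w; split.
      + intros [h2 hb]. destruct (Hsurj w h2) as [m [hm e]]. exists m. subst; auto.
      + intros [m [[hm hb] e]]; subst; auto. }
  set (LI := filter (decb (fun o => d x (emb o) < eps + delta/2)) enum).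
  set (LK := filter (decb (fun o => c - eps <= d (T x) (emb o))) enum).
  assert (NI : NoDup LI) by (apply NoDup_filter; auto).
  assert (NK : NoDup LK) by (apply NoDup_filter; auto).
  assert (InI : forall o, In o LI <-> d x (emb o) < eps + delta/2) by (intro o; exact (in_decb _ enum o Henum)).
  assert (InK : forall o, In o LK <-> c - eps <= d (T x) (emb o)) by (intro o; exact (in_decb _ enum o Henum)).
  destruct (pull _ (cyl1_meas (fun z => In z LI) 0%Z)) as [SAI muAI].
  destruct (pull _ (cyl1_meas (fun z => In z LK) 0%Z)) as [SAK muAK].
  destruct (pull _ (cyl2_meas (fun z => In z LI) (fun z => In z LK) 0%Z 1%Z)) as [SAC muAC].
  simpl in *.
  rewrite (cyl_sum1 p mu2 Hber) in muAI, muAK by auto.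
  rewrite (cyl_sum2 p mu2 Hber) in muAC by auto.
  rewrite <- muAI, <- muAK in muAC.
  assert (SnH1 : S (fun m => ~ H1 m)) by (apply sa_compl; auto).
  assert (SEH : S (fun m => E m \/ ~ H1 m)) by (apply sa_union; auto).
  assert (STE : S (fun m => E (T m))) by (apply Tmeas; auto).
  assert (muE0 : 0 <= mu E) by (apply (mu_nn S); auto).
  assert (muTE : mu (fun m => E (T m)) = mu E).
  { rewrite <- (Tmu _ STE). f_equal. apply seteq; intro y; split.
    - intros [z [h e]]; subst; auto.
    - intro h. destruct (Tsurj y) as [z e]; subst. exists z; auto. }
  assert (muEH : mu (fun m => E m \/ ~ H1 m) <= mu E).
  { apply Rle_trans with (mu E + mu (fun m => ~ H1 m)); [apply (mu_subadd S); auto|]. lra. }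
  assert (LB1 : b <= mu (fun m => H1 m /\ In (phi m 0%Z) LI) + mu (fun m => E m \/ ~ H1 m)).
  { assert (SB : S (ball d x (delta/2))) by (apply Hballs; lra).
    unfold b. apply (mu_cover S); auto.
    intros m hm. unfold ball in hm.
    destruct (classic (H1 m)) as [h1|h1]; [|right; auto].
    destruct (classic (E m)) as [he|he]; [right; auto|left].
    split; auto. apply InI. pose proof (Hclose m h1 he).
    pose proof (dtri x m (emb (phi m 0%Z))). lra. }
  assert (LB2 : a <= mu (fun m => H1 m /\ In (phi m 0%Z) LK) + mu (fun m => E m \/ ~ H1 m)).
  { unfold a. apply (mu_cover S); auto.
    intros m hm.
    destruct (classic (H1 m)) as [h1|h1]; [|right; auto].
    destruct (classic (E m)) as [he|he]; [right; auto|left].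
    split; auto. apply InK. pose proof (Hclose m h1 he). pose proof (HcD m hm).
    pose proof (dtri (T x) (emb (phi m 0%Z)) m). rewrite (dsym (emb _) m) in *. lra. }
  assert (UB : mu (fun m => H1 m /\ In (phi m 0%Z) LI /\ In (phi m 1%Z) LK) <= mu E + mu (fun m => E (T m))).
  { apply (mu_cover S); auto.
    intros m [h1 [hi hk]].
    destruct (classic (E m)) as [he|he]; [left; auto|].
    destruct (classic (E (T m))) as [he'|he']; [right; auto|].
    exfalso. apply InI in hi. apply InK in hk.
    pose proof (Hclose m h1 he) as c1.
    pose proof (Hclose (T m) (Hinv1 m h1) he') as c2.
    replace (phi (T m) 0%Z) with (phi m 1%Z) in c2 by (rewrite Hshift; auto).
    pose proof (dtri x (emb (phi m 0%Z)) m). rewrite (dsym (emb _) m) in *.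
    assert (hx : d (T x) (T m) < c/2) by (apply Hdelta; lra).
    pose proof (dtri (T x) (T m) (emb (phi m 1%Z))). lra. }
  assert (0 <= mu (fun m => H1 m /\ In (phi m 0%Z) LI)) by (apply (mu_nn S); auto).
  assert (0 <= mu (fun m => H1 m /\ In (phi m 0%Z) LK)) by (apply (mu_nn S); auto).
  assert (PR : (b/2)*(a/2) <= mu (fun m => H1 m /\ In (phi m 0%Z) LI) * mu (fun m => H1 m /\ In (phi m 0%Z) LK)).
  { apply Rmult_le_compat; unfold a in *; lra. }
  assert (Hq : (b/2)*(a/2) = a*b/4) by field.
  lra.
Qed.
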